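(* The structure $\mathbb{Q}_2$ is an extension of $\mathbf{S}(2)$; that is, $p(\mathbb{Q}_2)$ is isomorphic to $\mathbf{S}(2)$.
   Context: $\mathbf{S}(2)$ is the tournament whose vertices are the points of the unit circle of $\mathbb{C}$ with rational argument, with an arc from $x$ to $y$ iff $0<\arg(y/x)<\pi$. $\mathbb{Q}_2=(\mathbb{Q},<,Q_1,Q_2)$ where $<$ is the usual order of the rationals and $(Q_1,Q_2)$ is a partition of $\mathbb{Q}$ into two dense subsets. For a structure $\mathbf{A}=(A,<^{\mathbf{A}},P_1,P_2)$ with $<^{\mathbf{A}}$ a linear order and $(P_1,P_2)$ a partition of $A$, writing $a\sim b$ when $a,b$ lie in the same part, $p(\mathbf{A})$ is the tournament on $A$ with an arc from $a$ to $b$ iff either ($a\sim b$ and $a<^{\mathbf{A}}b$) or ($a\not\sim b$ and $b<^{\mathbf{A}}a$). An extension of a tournament $\mathbf{X}$ is any such $\mathbf{A}$ with $p(\mathbf{A})=\mathbf{X}$ (up to isomorphism). *)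

(* Defs.v *)
From Stdlib Require Import Reals QArith Qcanon.
From Coquelicot Require Import Coquelicot.

Open Scope R_scope.

Definition cexp (t : R) : C := (cos t, sin t).

Definition S2_vertex : Type := { z : C | exists q : Qc, z = cexp (Q2R q) }.

Definition S2_arc (x y : S2_vertex) : Prop :=
  exists t : R, 0 < t < PI /\ proj1_sig y = Cmult (proj1_sig x) (cexp t).

(* The tournament p(A) for A = (A, <, P, complement of P):
   arc a -> b iff (a ~ b and a < b) or (a !~ b and b < a). *)
Definition p_arc {A : Type} (lt : A -> A -> Prop) (P : A -> bool) (a b : A) : Prop :=
  (P a = P b /\ lt a b) \/ (P a <> P b /\ lt b a).

Definition tournament_iso {A B : Type} (arcA : A -> A -> Prop) (arcB : B -> B -> Prop) : Prop :=
  exists (f : A -> B) (g : B -> A),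
    (forall a, g (f a) = a) /\ (forall b, f (g b) = b) /\
    (forall a1 a2, arcA a1 a2 <-> arcB (f a1) (f a2)).

Definition dense_in_Q (D : Qc -> bool) : Prop :=
  forall a b : Qc, (a < b)%Qc -> exists c : Qc, D c = true /\ (a < c)%Qc /\ (c < b)%Qc.

(* Main.v *)
From Stdlib Require Reals Lra Lia QArith Qreals.
From HB Require structures.
From mathcomp Require all_ssreflect_compat ssralg ssrnum archimedean ssrint rat.
From mathcomp Require boolp classical_sets reals interval_inference.
From mathcomp Require Rstruct Rstruct_topology topology.
From mathcomp Require normedtype sequences trigo pi_irrational.

Module PiBridge.
Import Stdlib.Reals.Reals Stdlib.micromega.Lra Stdlib.micromega.Lia.
Local Open Scope R_scope.

Lemma key_PI (k : Z) (u : R) : u = (IZR k * PI + PI/2)%R -> (0 < u)%R -> (u < IZR 2)%R -> PI = (u * IZR 2)%R.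
Proof.
intros hk h1 h2. pose proof PI2_3_2. pose proof PI_RGT_0.
destruct (Z.lt_trichotomy k 0) as [Hk|[Hk|Hk]].
- assert (IZR k <= -1)%R by (apply IZR_le; lia). exfalso. nra.
- subst k. simpl in hk. lra.
- assert (1 <= IZR k)%R by (apply IZR_le; lia). exfalso. nra.
Qed.

Lemma PI_frac (k : Z) (r : Stdlib.QArith.QArith_base.Q) : k <> 0%Z -> (IZR k * PI = Rdefinitions.Q2R r)%R ->
  PI = (IZR (Stdlib.QArith.QArith_base.Qnum r) / (IZR (Zpos (Stdlib.QArith.QArith_base.Qden r)) * IZR k))%R.
Proof.
intros hk e. unfold Rdefinitions.Q2R in e.
assert (IZR k <> 0%R) by (apply not_0_IZR; exact hk).
assert (IZR (Zpos (Stdlib.QArith.QArith_base.Qden r)) <> 0%R) by (apply not_0_IZR; lia).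
apply (Rmult_eq_reg_l (IZR k)); [rewrite e; field; split; assumption | assumption].
Qed.

Import HB.structures.
Import all_ssreflect_compat ssralg ssrnum archimedean ssrint rat.
Import boolp classical_sets reals interval_inference.
Import Rstruct Rstruct_topology topology.
Import normedtype sequences trigo pi_irrational.
Import Order.TTheory GRing.Theory Num.Theory.
Local Open Scope ring_scope.
Lemma RcosE (x : R) : Rtrigo_def.cos x = trigo.cos x.
Proof.
rewrite /Rtrigo_def.cos; case: exist_cos => y.
rewrite /cos_in /infinite_sum => cos_ub.
have H : (series (cos_coeff' x : nat -> R^o) @ \oo --> (y:R^o))%classic.
  rewrite /series/=.
  rewrite -cvg_shiftS /=; apply/cvgrPdist_lt => /= e /RltP /cos_ub[N Ncos_ub].
  near=> n.
  have nN : (n >= N)%coq_nat by apply/ssrnat.leP; near: n; exact: nbhs_infty_ge.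
  move: Ncos_ub => /(_ _ nN) /[!RdistE] /RltP /=.
  rewrite distrC sum_f_R0E; congr (`| _ - _ | < e).
  apply: eq_bigr=> k _; rewrite /cos_coeff' /cos_n RdivE !RpowE factE INRE /Rsqr RmultE.
  have -> : (2 * k)%coq_nat = k.*2 by rewrite -mul2n.
  by rewrite -mul2n exprM expr2 mulrAC.

rewrite -(cvg_lim _ H) //. apply: (@cvg_lim R^o) => //. exact: cvg_cos_coeff'.
Unshelve. all: by end_near. Qed.

Lemma two_E : (2%:R : R) = IZR 2.
Proof. by rewrite -INRE /=; rewrite RplusE; rewrite !RealsE. Qed.
Lemma RPIE : PI = (trigo.pi : R).
Proof.
have h := @trigo.cos_pihalf R; rewrite -RcosE in h.
have [k hk] := cos_eq_0_0 _ h.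
have h1 : Rlt 0 (trigo.pi / 2).
  by apply/RltP; exact: (andP (@trigo.pihalf_02 R)).1.
have h2 : Rlt (trigo.pi / 2) (IZR 2).
  by apply/RltP; rewrite -two_E; exact: (andP (@trigo.pihalf_02 R)).2.
have pe : (trigo.pi : R) = Rmult (trigo.pi / 2) (IZR 2).
  by rewrite RmultE -two_E divfK // pnatr_eq0.
rewrite pe; apply: (key_PI k); [exact: hk|exact: h1|exact: h2].
Qed.

Definition z2i (z : Z) : int :=
  match z with Z0 => 0 | Zpos p => Posz (Pos.to_nat p) | Zneg p => - Posz (Pos.to_nat p) end.
Lemma z2iE (z : Z) : ((z2i z)%:~R : R) = IZR z.
Proof.
case: z => [|p|p] /=; first by [].
  by rewrite /IZR -INR_IPR INRE.
by rewrite mulrNz /IZR -INR_IPR INRE.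
Qed.

Lemma PI_irr (k : Z) (r : Stdlib.QArith.QArith_base.Q) : k <> Z0 -> Rmult (IZR k) PI <> Rdefinitions.Q2R r.
Proof.
move=> hk e; have := @PI_frac k r hk e; rewrite RPIE => pe.
apply: (@pi_irrationnal R).
exists ((z2i (Stdlib.QArith.QArith_base.Qnum r))%:~R / ((z2i (Zpos (Stdlib.QArith.QArith_base.Qden r)))%:~R * (z2i k)%:~R)) => //.
rewrite pe fmorph_div rmorphM. rewrite !rmorph_int !z2iE.
by [].
Qed.
End PiBridge.
Require Import Defs.
From Stdlib Require Import Reals QArith Qcanon.
From Coquelicot Require Import Coquelicot.
From Stdlib Require Import Qreals Lra Lia List Classical ClassicalEpsilon PeanoNat ProofIrrelevance Cantor.
Record CS := mkCS {
  car : Type;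
  clt : car -> car -> Prop;
  col : car -> bool;
  en : nat -> car;
  en_surj : forall x, exists n, en n = x;
  clt_irr : forall x, ~ clt x x;
  clt_trans : forall x y z, clt x y -> clt y z -> clt x z;
  clt_total : forall x y, clt x y \/ x = y \/ clt y x;
  c_dense : forall c x y, clt x y -> exists z, col z = c /\ clt x z /\ clt z y;
  c_above : forall c x, exists z, col z = c /\ clt x z;
  c_below : forall c x, exists z, col z = c /\ clt z x }.

Arguments clt {_} _ _.
Arguments col {_} _.

Lemma clt_asym (T : CS) (x y : car T) : clt x y -> ~ clt y x.
Proof. intros h1 h2. exact (clt_irr T x (clt_trans T _ _ _ h1 h2)). Qed.

Lemma max_exists (T : CS) (Lo : car T -> Prop) (l : list (car T)) :
  (exists x, In x l /\ Lo x) ->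
  exists m, In m l /\ Lo m /\ forall x, In x l -> Lo x -> clt x m \/ x = m.
Proof.
induction l as [|a l IH]; intros [x [hx hl]].
- destruct hx.
- destruct (classic (exists x, In x l /\ Lo x)) as [E|NE].
  + destruct (IH E) as [m [hm1 [hm2 hm3]]].
    destruct (classic (Lo a)) as [La|nLa].
    * destruct (clt_total T a m) as [h|[h|h]].
      -- exists m. split; [right; exact hm1|]. split; [exact hm2|].
         intros y [<-|hy] hly; [left; exact h| exact (hm3 y hy hly)].
      -- exists m. split; [right; exact hm1|]. split; [exact hm2|].
         intros y [<-|hy] hly; [right; exact h| exact (hm3 y hy hly)].
      -- exists a. split; [left; reflexivity|]. split; [exact La|].
         intros y [<-|hy] hly; [right; reflexivity|].
         destruct (hm3 y hy hly) as [h'|h']; left; [exact (clt_trans T _ _ _ h' h)| subst; exact h].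
    * exists m. split; [right; exact hm1|]. split; [exact hm2|].
      intros y [<-|hy] hly; [contradiction| exact (hm3 y hy hly)].
  + assert (a = x) as <-.
    { destruct hx as [hx|hx]; [exact hx| exfalso; apply NE; exists x; split; assumption]. }
    exists a. split; [left; reflexivity|]. split; [exact hl|].
    intros y [<-|hy] hly; [right; reflexivity| exfalso; apply NE; exists y; split; assumption].
Qed.

Lemma min_exists (T : CS) (Hi : car T -> Prop) (l : list (car T)) :
  (exists x, In x l /\ Hi x) ->
  exists m, In m l /\ Hi m /\ forall x, In x l -> Hi x -> clt m x \/ x = m.
Proof.
induction l as [|a l IH]; intros [x [hx hl]].
- destruct hx.
- destruct (classic (exists x, In x l /\ Hi x)) as [E|NE].
  + destruct (IH E) as [m [hm1 [hm2 hm3]]].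
    destruct (classic (Hi a)) as [La|nLa].
    * destruct (clt_total T a m) as [h|[h|h]].
      -- exists a. split; [left; reflexivity|]. split; [exact La|].
         intros y [<-|hy] hly; [right; reflexivity|].
         destruct (hm3 y hy hly) as [h'|h']; left; [exact (clt_trans T _ _ _ h h')| subst; exact h].
      -- exists m. split; [right; exact hm1|]. split; [exact hm2|].
         intros y [<-|hy] hly; [right; exact h| exact (hm3 y hy hly)].
      -- exists m. split; [right; exact hm1|]. split; [exact hm2|].
         intros y [<-|hy] hly; [left; exact h| exact (hm3 y hy hly)].
    * exists m. split; [right; exact hm1|]. split; [exact hm2|].
      intros y [<-|hy] hly; [contradiction| exact (hm3 y hy hly)].
  + assert (a = x) as <-.
    { destruct hx as [hx|hx]; [exact hx| exfalso; apply NE; exists x; split; assumption]. }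
    exists a. split; [left; reflexivity|]. split; [exact hl|].
    intros y [<-|hy] hly; [right; reflexivity| exfalso; apply NE; exists y; split; assumption].
Qed.

Lemma between (T : CS) (l : list (car T)) (Lo Hi : car T -> Prop) (c : bool) :
  (forall x y, In x l -> In y l -> Lo x -> Hi y -> clt x y) ->
  exists b, col b = c /\ forall x, In x l -> (Lo x -> clt x b) /\ (Hi x -> clt b x).
Proof.
intros H.
destruct (classic (exists x, In x l /\ Lo x)) as [EL|NL];
destruct (classic (exists x, In x l /\ Hi x)) as [EH|NH].
- destruct (max_exists T Lo l EL) as [m [m1 [m2 m3]]].
  destruct (min_exists T Hi l EH) as [M [M1 [M2 M3]]].
  destruct (c_dense T c m M (H m M m1 M1 m2 M2)) as [z [zc [z1 z2]]].
  exists z. split; [exact zc|]. intros x hx. split; intro hh.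
  + destruct (m3 x hx hh) as [h|h]; [exact (clt_trans T _ _ _ h z1)| subst; exact z1].
  + destruct (M3 x hx hh) as [h|h]; [exact (clt_trans T _ _ _ z2 h)| subst; exact z2].
- destruct (max_exists T Lo l EL) as [m [m1 [m2 m3]]].
  destruct (c_above T c m) as [z [zc z1]].
  exists z. split; [exact zc|]. intros x hx. split; intro hh.
  + destruct (m3 x hx hh) as [h|h]; [exact (clt_trans T _ _ _ h z1)| subst; exact z1].
  + exfalso; apply NH; exists x; split; assumption.
- destruct (min_exists T Hi l EH) as [M [M1 [M2 M3]]].
  destruct (c_below T c M) as [z [zc z2]].
  exists z. split; [exact zc|]. intros x hx. split; intro hh.
  + exfalso; apply NL; exists x; split; assumption.
  + destruct (M3 x hx hh) as [h|h]; [exact (clt_trans T _ _ _ z2 h)| subst; exact z2].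
- destruct (c_above T c (en T 0)) as [z [zc _]].
  exists z. split; [exact zc|]. intros x hx. split; intro hh.
  + exfalso; apply NL; exists x; split; assumption.
  + exfalso; apply NH; exists x; split; assumption.
Qed.


Definition good (S T : CS) (l : list (car S * car T)) : Prop :=
  forall p q, In p l -> In q l ->
    (clt (fst p) (fst q) <-> clt (snd p) (snd q)) /\ col (fst p) = col (snd p).

Definition swp {A B : Type} (l : list (A * B)) : list (B * A) :=
  map (fun p => (snd p, fst p)) l.

Lemma swp_swp {A B : Type} (l : list (A * B)) : swp (swp l) = l.
Proof.
unfold swp. induction l as [|[a b] l IH]; simpl; [reflexivity| rewrite IH; reflexivity].
Qed.

Lemma in_swp {A B : Type} (l : list (A * B)) (a : A) (b : B) : In (b, a) (swp l) <-> In (a, b) l.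
Proof.
unfold swp. rewrite in_map_iff. split.
- intros [[x y] [h1 h2]]. simpl in h1. inversion h1; subst. exact h2.
- intros h. exists (a, b). split; [reflexivity| exact h].
Qed.

Lemma good_swp (S T : CS) (l : list (car S * car T)) : good S T l -> good T S (swp l).
Proof.
intros g [b1 a1] [b2 a2] h1 h2. apply (proj1 (in_swp l _ _)) in h1. apply (proj1 (in_swp l _ _)) in h2.
destruct (g _ _ h1 h2) as [e c]. simpl in *. split; [symmetry; exact e| symmetry; exact c].
Qed.

Lemma good_in (S T : CS) (l : list (car S * car T)) x : good S T l -> In x l -> good S T (x :: l).
Proof.
intros g hx p q hp hq.
assert (hp' : In p l) by (destruct hp as [<-|hp]; assumption).
assert (hq' : In q l) by (destruct hq as [<-|hq]; assumption).
exact (g p q hp' hq').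
Qed.

Lemma ext_exists (S T : CS) (l : list (car S * car T)) (a : car S) :
  good S T l -> exists b, good S T ((a, b) :: l).
Proof.
intros g.
destruct (classic (exists b0, In (a, b0) l)) as [[b0 hb0]|N].
- exists b0. exact (good_in S T l _ g hb0).
- set (Lo := fun y => exists a', In (a', y) l /\ clt a' a).
  set (Hi := fun y => exists a', In (a', y) l /\ clt a a').
  destruct (between T (map snd l) Lo Hi (col a)) as [b [bc bH]].
  { intros x y _ _ [a1 [i1 l1]] [a2 [i2 l2]].
    destruct (g _ _ i1 i2) as [e _]. apply e. simpl. exact (clt_trans S _ _ _ l1 l2). }
  assert (key : forall a' b', In (a', b') l -> (clt a a' <-> clt b b') /\ (clt a' a <-> clt b' b)).
  { intros a' b' h.
    assert (hin : In b' (map snd l)) by (apply in_map_iff; exists (a', b'); split; [reflexivity|exact h]).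
    destruct (bH b' hin) as [bL bR].
    destruct (clt_total S a a') as [h1|[h1|h1]].
    - assert (hb : clt b b') by (apply bR; exists a'; split; assumption).
      split; split; intro hh; try assumption.
      + exfalso; exact (clt_asym S _ _ h1 hh).
      + exfalso; exact (clt_asym T _ _ hb hh).
    - subst a'. exfalso. apply N. exists b'. exact h.
    - assert (hb : clt b' b) by (apply bL; exists a'; split; assumption).
      split; split; intro hh; try assumption.
      + exfalso; exact (clt_asym S _ _ h1 hh).
      + exfalso; exact (clt_asym T _ _ hb hh). }
  exists b. intros p q hp hq.
  destruct hp as [<-|hp]; destruct hq as [<-|hq]; simpl.
  + split; [split; intro hh; exfalso; [exact (clt_irr S _ hh)| exact (clt_irr T _ hh)]| symmetry; exact bc].
  + destruct q as [a' b']. simpl. split; [exact (proj1 (key a' b' hq))| symmetry; exact bc].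
  + destruct p as [a' b']. simpl. split; [exact (proj2 (key a' b' hp))|].
    exact (proj2 (g _ _ hp hp)).
  + exact (g p q hp hq).
Qed.

Definition ext (S T : CS) (l : list (car S * car T)) (a : car S) : car T :=
  epsilon (inhabits (en T 0)) (fun b => good S T ((a, b) :: l)).

Lemma ext_good (S T : CS) (l : list (car S * car T)) (a : car S) :
  good S T l -> good S T ((a, ext S T l a) :: l).
Proof.
intros g. unfold ext. apply (epsilon_spec (inhabits (en T 0)) (fun b => good S T ((a, b) :: l))).
exact (ext_exists S T l a g).
Qed.

Fixpoint build (S T : CS) (n : nat) : list (car S * car T) :=
  match n with
  | O => nil
  | Datatypes.S n =>
      let l1 := (en S n, ext S T (build S T n) (en S n)) :: build S T n in
      swp ((en T n, ext T S (swp l1) (en T n)) :: swp l1)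
  end.

Lemma build_S (S T : CS) (n : nat) : build S T (Datatypes.S n) =
  (ext T S (swp ((en S n, ext S T (build S T n) (en S n)) :: build S T n)) (en T n), en T n)
  :: (en S n, ext S T (build S T n) (en S n)) :: build S T n.
Proof.
simpl build. unfold swp at 1. simpl map. fold (swp (swp ((en S n, ext S T (build S T n) (en S n)) :: build S T n))).
rewrite swp_swp. reflexivity.
Qed.

Lemma build_good (S T : CS) (n : nat) : good S T (build S T n).
Proof.
induction n as [|n IH].
- intros p q hp. destruct hp.
- simpl build.
  pose proof (ext_good S T _ (en S n) IH) as g1.
  pose proof (good_swp S T _ g1) as g2.
  pose proof (ext_good T S _ (en T n) g2) as g3.
  pose proof (good_swp T S _ g3) as g4.
  exact g4.
Qed.

Lemma build_mono (S T : CS) (n m : nat) x : (n <= m)%nat -> In x (build S T n) -> In x (build S T m).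
Proof.
intros h. induction h as [|m h IH]; intros hx; [exact hx|].
rewrite build_S. right. right. exact (IH hx).
Qed.

Lemma build_dom (S T : CS) (a : car S) : exists n b, In (a, b) (build S T n).
Proof.
destruct (en_surj S a) as [k hk]. exists (Datatypes.S k).
rewrite build_S. eexists. right. left. rewrite hk. reflexivity.
Qed.

Lemma build_rng (S T : CS) (b : car T) : exists n a, In (a, b) (build S T n).
Proof.
destruct (en_surj T b) as [k hk]. exists (Datatypes.S k).
rewrite build_S. eexists. left. rewrite hk. reflexivity.
Qed.

Lemma build_both (S T : CS) n m p q : In p (build S T n) -> In q (build S T m) ->
  (clt (fst p) (fst q) <-> clt (snd p) (snd q)) /\ col (fst p) = col (snd p).
Proof.
intros hp hq. apply (build_good S T (Nat.max n m)).
- apply (build_mono S T n); [lia| exact hp].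
- apply (build_mono S T m); [lia| exact hq].
Qed.

Lemma build_fun (S T : CS) n m a b b' : In (a, b) (build S T n) -> In (a, b') (build S T m) -> b = b'.
Proof.
intros h1 h2. destruct (build_both S T n m _ _ h1 h2) as [e _]. simpl in e.
destruct (clt_total T b b') as [h|[h|h]]; [| exact h|].
- exfalso. apply (clt_irr S a). apply e. exact h.
- exfalso. destruct (build_both S T m n _ _ h2 h1) as [e' _]. simpl in e'.
  apply (clt_irr S a). apply e'. exact h.
Qed.

Lemma build_inj (S T : CS) n m a a' b : In (a, b) (build S T n) -> In (a', b) (build S T m) -> a = a'.
Proof.
intros h1 h2. destruct (build_both S T n m _ _ h1 h2) as [e _]. simpl in e.
destruct (clt_total S a a') as [h|[h|h]]; [| exact h|].
- exfalso. apply (clt_irr T b). apply e. exact h.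
- exfalso. destruct (build_both S T m n _ _ h2 h1) as [e' _]. simpl in e'.
  apply (clt_irr T b). apply e'. exact h.
Qed.

Theorem back_forth (S T : CS) : exists (f : car S -> car T) (g : car T -> car S),
  (forall a, g (f a) = a) /\ (forall b, f (g b) = b) /\
  (forall a1 a2, clt a1 a2 <-> clt (f a1) (f a2)) /\ (forall a, col (f a) = col a).
Proof.
set (f := fun a => epsilon (inhabits (en T 0)) (fun b => exists n, In (a, b) (build S T n))).
set (g := fun b => epsilon (inhabits (en S 0)) (fun a => exists n, In (a, b) (build S T n))).
assert (hf : forall a, exists n, In (a, f a) (build S T n)).
{ intros a. unfold f. apply (epsilon_spec (inhabits (en T 0)) (fun b => exists n, In (a, b) (build S T n))).
  destruct (build_dom S T a) as [n [b h]]. exists b, n. exact h. }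
assert (hg : forall b, exists n, In (g b, b) (build S T n)).
{ intros b. unfold g. apply (epsilon_spec (inhabits (en S 0)) (fun a => exists n, In (a, b) (build S T n))).
  destruct (build_rng S T b) as [n [a h]]. exists a, n. exact h. }
exists f, g. split; [|split; [|split]].
- intros a. destruct (hf a) as [n hn]. destruct (hg (f a)) as [m hm].
  symmetry. exact (build_inj S T n m _ _ _ hn hm).
- intros b. destruct (hg b) as [n hn]. destruct (hf (g b)) as [m hm].
  symmetry. exact (build_fun S T n m _ _ _ hn hm).
- intros a1 a2. destruct (hf a1) as [n hn]. destruct (hf a2) as [m hm].
  exact (proj1 (build_both S T n m _ _ hn hm)).
- intros a. destruct (hf a) as [n hn]. symmetry. exact (proj2 (build_both S T n n _ _ hn hn)).
Qed.

Definition qen (n : nat) : Qc :=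
  let (a, r) := Cantor.of_nat n in
  let (b, c) := Cantor.of_nat r in
  Q2Qc (Qmake (Z.of_nat b - Z.of_nat c) (Pos.of_succ_nat a)).

Lemma qen_surj (q : Qc) : exists n, qen n = q.
Proof.
destruct q as [[num den] hq].
exists (Cantor.to_nat (Nat.pred (Pos.to_nat den), Cantor.to_nat (Z.to_nat num, Z.to_nat (- num)))).
unfold qen. rewrite Cantor.cancel_of_to. rewrite Cantor.cancel_of_to.
apply Qc_is_canon. eapply Qeq_trans; [apply Qred_correct|]. unfold Qeq. cbn [Qnum Qden this].
rewrite Znat.Zpos_P_of_succ_nat.
assert (h := Pos2Nat.is_pos den).
assert (e : Z.of_nat (Nat.pred (Pos.to_nat den)) = (Z.pos den - 1)%Z).
{ rewrite <- Znat.positive_nat_Z. lia. }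
rewrite e. lia.
Qed.

Lemma Qc_lt_succ (x : Qc) : Qclt x (Q2Qc (x + 1)).
Proof.
unfold Qclt, Q2Qc. cbn [this]. rewrite Qred_correct.
setoid_replace (this x) with (this x + 0)%Q at 1 by (rewrite Qplus_0_r; reflexivity).
apply Qplus_lt_r. reflexivity.
Qed.

Lemma Qc_lt_pred (x : Qc) : Qclt (Q2Qc (x + (-1))) x.
Proof.
unfold Qclt, Q2Qc. cbn [this]. rewrite Qred_correct.
setoid_replace (this x) with (this x + 0)%Q at 2 by (rewrite Qplus_0_r; reflexivity).
apply Qplus_lt_r. reflexivity.
Qed.

Section dummy_not_used. End dummy_not_used.

Definition QcCS (P : Qc -> bool) (dense1 : dense_in_Q P)
  (dense2 : dense_in_Q (fun q => negb (P q))) : CS.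
Proof.
refine (mkCS Qc Qclt P qen qen_surj _ _ _ _ _ _).
- intros x h. exact (Qlt_irrefl _ h).
- intros x y z. exact (Qclt_trans x y z).
- intros x y. destruct (Qc_dec x y) as [[h|h]|h]; [left| right; right| right; left]; assumption.
- intros c x y h. destruct c.
  + exact (dense1 x y h).
  + destruct (dense2 x y h) as [z [hz1 hz2]]. exists z. split; [|exact hz2].
    apply Bool.negb_true_iff. exact hz1.
- intros c x. destruct c.
  + destruct (dense1 x _ (Qc_lt_succ x)) as [z [hz1 [hz2 _]]]. exists z. split; assumption.
  + destruct (dense2 x _ (Qc_lt_succ x)) as [z [hz1 [hz2 _]]]. exists z. split; [|assumption].
    apply Bool.negb_true_iff. exact hz1.
- intros c x. destruct c.
  + destruct (dense1 _ x (Qc_lt_pred x)) as [z [hz1 [_ hz2]]]. exists z. split; assumption.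
  + destruct (dense2 _ x (Qc_lt_pred x)) as [z [hz1 [_ hz2]]]. exists z. split; [|assumption].
    apply Bool.negb_true_iff. exact hz1.
Defined.

Local Open Scope R_scope.

Lemma cos_q_ne0 (q : Q) : cos (Q2R q) <> 0.
Proof.
intro h. destruct (cos_eq_0_0 _ h) as [k hk].
apply (PiBridge.PI_irr (2 * k + 1)%Z (q + q)%Q); [lia|].
rewrite Q2R_plus, hk, plus_IZR, mult_IZR. simpl IZR. lra.
Qed.

Lemma sin_q_0 (q1 q2 : Q) : sin (Q2R q1 - Q2R q2) = 0 -> Q2R q1 = Q2R q2.
Proof.
intro h. destruct (sin_eq_0_0 _ h) as [k hk].
destruct (Z.eq_dec k 0) as [e|ne].
- subst k. simpl IZR in hk. lra.
- exfalso. apply (PiBridge.PI_irr k (q1 - q2)%Q ne). rewrite Q2R_minus. lra.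
Qed.

Lemma Q_dense_R (u v : R) : u < v -> exists r : Q, u < Q2R r < v.
Proof.
intro h.
set (n := up (/ (v - u))).
destruct (archimed (/ (v - u))) as [a1 a2].
assert (hvu : 0 < / (v - u)) by (apply Rinv_0_lt_compat; lra).
assert (hn : 0 < IZR n) by (unfold n; lra).
assert (hnz : (0 < n)%Z) by (apply lt_IZR; exact hn).
set (m := up (u * IZR n)).
destruct (archimed (u * IZR n)) as [b1 b2].
exists (Qmake m (Z.to_pos n)).
unfold Q2R. cbn [Qnum Qden]. rewrite Z2Pos.id by exact hnz.
fold n in a1. fold m in b1, b2.
assert (k1 : 1 < (v - u) * IZR n).
{ apply (Rmult_lt_reg_l (/ (v - u))); [exact hvu|].
  rewrite <- Rmult_assoc, Rinv_l by lra. lra. }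
split.
- apply (Rmult_lt_reg_r (IZR n)); [exact hn|].
  rewrite Rmult_assoc, Rinv_l by lra. lra.
- apply (Rmult_lt_reg_r (IZR n)); [exact hn|].
  rewrite Rmult_assoc, Rinv_l by lra. lra.
Qed.

Lemma Qc_dense_R (u v : R) : u < v -> exists q : Qc, u < Q2R q < v.
Proof.
intro h. destruct (Q_dense_R u v h) as [r hr].
exists (Q2Qc r). unfold Q2Qc. cbn [this].
rewrite (Qeq_eqR _ _ (Qred_correct r)). exact hr.
Qed.

Lemma tan_between (x u v : R) : -(PI/2) < x < PI/2 -> atan u < x < atan v -> u < tan x < v.
Proof.
intros hx [h1 h2]. rewrite <- (atan_tan x hx) in h1, h2. split.
- destruct (Rtotal_order u (tan x)) as [e|[e|e]]; [exact e| |].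
  + rewrite e in h1. lra.
  + apply atan_increasing in e. lra.
- destruct (Rtotal_order (tan x) v) as [e|[e|e]]; [exact e| |].
  + rewrite e in h2. lra.
  + apply atan_increasing in e. lra.
Qed.

Lemma real_dense_col (c : bool) (u v : R) : u < v ->
  exists q : Qc, (if c then 0 < cos (Q2R q) else cos (Q2R q) < 0) /\
                 u < sin (Q2R q) / cos (Q2R q) < v.
Proof.
intro h. pose proof (atan_increasing u v h) as hi.
pose proof (atan_bound u) as bu. pose proof (atan_bound v) as bv.
destruct c.
- destruct (Qc_dense_R (atan u) (atan v) hi) as [q hq].
  exists q. split.
  + apply cos_gt_0; lra.
  + apply tan_between; lra.
- destruct (Qc_dense_R (atan u + PI) (atan v + PI)) as [q hq]; [lra|].
  exists q. set (x := Q2R q - PI).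
  assert (ex : Q2R q = x + PI) by (unfold x; ring).
  rewrite ex, neg_cos, neg_sin. split.
  + assert (0 < cos x) by (apply cos_gt_0; unfold x; lra). lra.
  + assert (hc : 0 < cos x) by (apply cos_gt_0; unfold x; lra).
    replace (- sin x / - cos x) with (tan x) by (unfold tan; field; lra).
    apply tan_between; unfold x; lra.
Qed.

Definition vre (v : S2_vertex) : R := fst (proj1_sig v).
Definition vim (v : S2_vertex) : R := snd (proj1_sig v).
Definition vkey (v : S2_vertex) : R := vim v / vre v.
Definition vcol (v : S2_vertex) : bool := if Rlt_dec 0 (vre v) then true else false.
Definition vlt (u v : S2_vertex) : Prop := vkey u < vkey v.

Lemma vrep (v : S2_vertex) : exists q : Qc, vre v = cos (Q2R q) /\ vim v = sin (Q2R q).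
Proof.
destruct v as [z [q hq]]. exists q. unfold vre, vim. simpl. rewrite hq. split; reflexivity.
Qed.

Lemma v_eq (u v : S2_vertex) : vre u = vre v -> vim u = vim v -> u = v.
Proof.
intros h1 h2. apply eq_sig_hprop.
- intros x p1 p2. apply proof_irrelevance.
- unfold vre, vim in *. destruct (proj1_sig u), (proj1_sig v). simpl in *. subst. reflexivity.
Qed.

Definition mkv (q : Qc) : S2_vertex := exist _ (cexp (Q2R q)) (ex_intro _ q eq_refl).

Definition ven (n : nat) : S2_vertex := mkv (qen n).

Lemma ven_surj (v : S2_vertex) : exists n, ven n = v.
Proof.
destruct v as [z [q hq]]. destruct (qen_surj q) as [n hn]. exists n.
apply eq_sig_hprop; [intros x p1 p2; apply proof_irrelevance|].
simpl. rewrite hn, hq. reflexivity.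
Qed.

Lemma vre_ne0 (v : S2_vertex) : vre v <> 0.
Proof. destruct (vrep v) as [q [h1 _]]. rewrite h1. apply cos_q_ne0. Qed.

Lemma vlt_total (u v : S2_vertex) : vlt u v \/ u = v \/ vlt v u.
Proof.
unfold vlt. destruct (Rtotal_order (vkey u) (vkey v)) as [h|[h|h]]; [left; exact h| |right; right; exact h].
right; left.
destruct (vrep u) as [q1 [a1 b1]]. destruct (vrep v) as [q2 [a2 b2]].
pose proof (vre_ne0 u) as n1. pose proof (vre_ne0 v) as n2.
unfold vkey in h.
assert (hs : sin (Q2R q2 - Q2R q1) = 0).
{ rewrite sin_minus. rewrite <- a1, <- a2, <- b1, <- b2.
  replace (vim v * vre u - vre v * vim u) with (vre u * vre v * (vim v / vre v - vim u / vre u))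
    by (field; split; assumption).
  rewrite h. ring. }
apply sin_q_0 in hs.
apply v_eq.
- rewrite a1, a2, hs. reflexivity.
- rewrite b1, b2, hs. reflexivity.
Qed.

Lemma vcol_mk (q : Qc) (c : bool) : (if c then 0 < cos (Q2R q) else cos (Q2R q) < 0) ->
  vcol (mkv q) = c.
Proof.
intro h. unfold vcol, vre, mkv. simpl. destruct (Rlt_dec 0 (cos (Q2R q))) as [e|e]; destruct c; try reflexivity; lra.
Qed.

Lemma vkey_mk (q : Qc) : vkey (mkv q) = sin (Q2R q) / cos (Q2R q).
Proof. reflexivity. Qed.

Definition S2CS : CS.
Proof.
refine (mkCS S2_vertex vlt vcol ven ven_surj _ _ vlt_total _ _ _).
- intros x h. unfold vlt in h. lra.
- intros x y z h1 h2. unfold vlt in *. lra.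
- intros c x y h. destruct (real_dense_col c (vkey x) (vkey y) h) as [q [hc hk]].
  exists (mkv q). split; [exact (vcol_mk q c hc)|]. unfold vlt. rewrite vkey_mk. exact hk.
- intros c x. destruct (real_dense_col c (vkey x) (vkey x + 1)) as [q [hc hk]]; [lra|].
  exists (mkv q). split; [exact (vcol_mk q c hc)|]. unfold vlt. rewrite vkey_mk. lra.
- intros c x. destruct (real_dense_col c (vkey x - 1) (vkey x)) as [q [hc hk]]; [lra|].
  exists (mkv q). split; [exact (vcol_mk q c hc)|]. unfold vlt. rewrite vkey_mk. lra.
Defined.

Lemma cmp_pos (a b c d : R) : a <> 0 -> c <> 0 -> 0 < a * c -> (b / a < d / c <-> 0 < a * d - b * c).
Proof.
intros ha hc hac.
assert (e1 : b / a * (a * c) = b * c) by (field; auto).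
assert (e2 : d / c * (a * c) = a * d) by (field; auto).
split; intro h.
- apply (Rmult_lt_compat_r (a * c)) in h; [|exact hac]. rewrite e1, e2 in h. lra.
- apply (Rmult_lt_reg_r (a * c)); [exact hac|]. rewrite e1, e2. lra.
Qed.

Lemma cmp_neg (a b c d : R) : a <> 0 -> c <> 0 -> a * c < 0 -> (d / c < b / a <-> 0 < a * d - b * c).
Proof.
intros ha hc hac.
assert (hac' : 0 < - (a * c)) by lra.
assert (e1 : b / a * - (a * c) = - (b * c)) by (field; auto).
assert (e2 : d / c * - (a * c) = - (a * d)) by (field; auto).
split; intro h.
- apply (Rmult_lt_compat_r (- (a * c))) in h; [|exact hac']. rewrite e1, e2 in h. lra.
- apply (Rmult_lt_reg_r (- (a * c))); [exact hac'|]. rewrite e1, e2. lra.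
Qed.

Lemma parc_iff (u v : S2_vertex) :
  p_arc vlt vcol u v <-> 0 < vre u * vim v - vim u * vre v.
Proof.
pose proof (vre_ne0 u) as n1. pose proof (vre_ne0 v) as n2.
unfold p_arc, vlt, vkey, vcol.
destruct (Rlt_dec 0 (vre u)) as [h1|h1]; destruct (Rlt_dec 0 (vre v)) as [h2|h2].
- assert (hp : 0 < vre u * vre v) by (apply Rmult_lt_0_compat; assumption).
  rewrite <- (cmp_pos (vre u) (vim u) (vre v) (vim v) n1 n2 hp).
  split; [intros [[_ h]|[h _]]; [exact h| exfalso; apply h; reflexivity]| intro h; left; split; [reflexivity| exact h]].
- assert (hp : vre u * vre v < 0) by (assert (vre v < 0) by lra; nra).
  rewrite <- (cmp_neg (vre u) (vim u) (vre v) (vim v) n1 n2 hp).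
  split; [intros [[h _]|[_ h]]; [discriminate h| exact h]| intro h; right; split; [discriminate| exact h]].
- assert (hp : vre u * vre v < 0) by (assert (vre u < 0) by lra; nra).
  rewrite <- (cmp_neg (vre u) (vim u) (vre v) (vim v) n1 n2 hp).
  split; [intros [[h _]|[_ h]]; [discriminate h| exact h]| intro h; right; split; [discriminate| exact h]].
- assert (hp : 0 < vre u * vre v) by (assert (vre u < 0) by lra; assert (vre v < 0) by lra; nra).
  rewrite <- (cmp_pos (vre u) (vim u) (vre v) (vim v) n1 n2 hp).
  split; [intros [[_ h]|[h _]]; [exact h| exfalso; apply h; reflexivity]| intro h; left; split; [reflexivity| exact h]].
Qed.

Lemma arc_iff (u v : S2_vertex) :
  S2_arc u v <-> 0 < vre u * vim v - vim u * vre v.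
Proof.
destruct (vrep u) as [q1 [a1 b1]]. destruct (vrep v) as [q2 [a2 b2]].
pose proof (sin2_cos2 (Q2R q1)) as p1. unfold Rsqr in p1.
unfold S2_arc. split.
- intros [t [ht e]].
  assert (ec : vre v = vre u * cos t - vim u * sin t) by (unfold vre, vim; rewrite e; reflexivity).
  assert (es : vim v = vre u * sin t + vim u * cos t) by (unfold vre, vim; rewrite e; reflexivity).
  rewrite ec, es.
  replace (vre u * (vre u * sin t + vim u * cos t) - vim u * (vre u * cos t - vim u * sin t))
    with ((vre u * vre u + vim u * vim u) * sin t) by ring.
  rewrite a1, b1. replace (cos (Q2R q1) * cos (Q2R q1) + sin (Q2R q1) * sin (Q2R q1)) with 1 by lra.
  rewrite Rmult_1_l. apply sin_gt_0; lra.
- intro h.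
  set (t0 := Q2R q2 - Q2R q1).
  assert (hs0 : sin t0 = vre u * vim v - vim u * vre v).
  { unfold t0. rewrite sin_minus, a1, a2, b1, b2. ring. }
  assert (hc0 : cos t0 = vre u * vre v + vim u * vim v).
  { unfold t0. rewrite cos_minus, a1, a2, b1, b2. ring. }
  pose proof (COS_bound t0) as cb.
  set (t := acos (cos t0)).
  assert (ct : cos t = cos t0) by (unfold t; apply cos_acos; lra).
  assert (st : sin t = sin t0).
  { unfold t. rewrite sin_acos by lra.
    pose proof (sin2_cos2 t0) as p0.
    replace (1 - (cos t0)²) with ((sin t0)²) by lra.
    apply sqrt_Rsqr. lra. }
  pose proof (acos_bound (cos t0)) as tb. fold t in tb.
  exists t. split.
  + split.
    * destruct (Rle_lt_or_eq_dec 0 t (proj1 tb)) as [l|l]; [exact l|].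
      exfalso. rewrite <- l, sin_0 in st. lra.
    * destruct (Rle_lt_or_eq_dec t PI (proj2 tb)) as [l|l]; [exact l|].
      exfalso. rewrite l, sin_PI in st. lra.
  + destruct v as [zv pv]. destruct u as [zu pu]. unfold vre, vim in *. simpl in *.
    destruct zu as [a b]. destruct zv as [c d]. simpl in *.
    unfold cexp, Cmult. simpl. rewrite ct, st, hc0, hs0.
    assert (n1 : a * a + b * b = 1) by (rewrite a1, b1; lra).
    f_equal.
    * replace c with (c * (a * a + b * b)) at 1 by (rewrite n1; ring). ring.
    * replace d with (d * (a * a + b * b)) at 1 by (rewrite n1; ring). ring.
Qed.

Theorem lemma4 (P : Qc -> bool)
  (dense1 : dense_in_Q P) (dense2 : dense_in_Q (fun q => negb (P q))) :
  tournament_iso (p_arc Qclt P) S2_arc.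
Proof.
destruct (back_forth (QcCS P dense1 dense2) S2CS) as [f [g [h1 [h2 [h3 h4]]]]].
exists f, g. split; [exact h1|]. split; [exact h2|].
intros a1 a2. rewrite arc_iff, <- parc_iff.
simpl in h3, h4. unfold p_arc. rewrite h4, h4, <- h3, <- h3. tauto.
Qed.
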